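(* In the setting below: (i) $(e_j)$ is a normalized monotone basis of $Z$; (ii) if $(u_j)$ is boundedly complete, then so is $(e_j)$; (iii) for every $\sum_ia_ie_i\in Z$ the series $\sum_ia_ix_i$ converges in $X$, and the map $Q:Z\to X$, $Q(\sum_ja_je_j)=\sum_ja_jx_j$, is a quotient map with $\|Q\|\le1$ such that $B_X\subseteq Q((1+\varepsilon)B_Z)$ for every $\varepsilon>0$.
   Context: Setting: $X$ is a separable Banach space, $(x_n)$ a sequence in $S_X$ such that $\{\pm x_n\}$ is dense in $S_X$; $U$ is a Banach space with a normalized $1$-unconditional basis $(u_n)$. For finite $I,J\subseteq\mathbb N$, $I<J$ means $\max I<\min J$. On $c_{00}$ with unit vectors $(e_i)$ define, for $a=\sum_ia_ie_i$, $$\|a\|_Z=\max\left\{\left\|\sum_{j=1}^k\Big\|\sum_{i\in I_j}a_ix_i\Big\|_Xu_{\min I_j}\right\|_U: k\in\mathbb N,\ I_1<\dots<I_k\text{ intervals in }\mathbb N\right\},$$ and let $Z$ be the completion of $c_{00}$ under this norm. *)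

(* Defs.v *)
From HB Require Import structures.
From mathcomp Require Import all_boot all_order all_algebra.
From mathcomp Require Import all_classical all_reals all_analysis.
Set Implicit Arguments. Unset Strict Implicit. Unset Printing Implicit Defensive.
Import Order.TTheory GRing.Theory Num.Theory.
Import numFieldNormedType.Exports.
Local Open Scope classical_set_scope.
Local Open Scope ring_scope.

Section Defs.
Variable R : realType.

Definition bpsum (V : normedModType R) (a : nat -> R) (v : nat -> V) (n : nat) : V :=
  \sum_(i < n) a i *: v i.

Definition ban_separable (V : normedModType R) : Prop :=
  exists D : nat -> V, forall y : V, forall eps : R, 0 < eps ->
    exists n, `|y - D n| < eps.

Definition ban_schauder_basis (V : normedModType R) (v : nat -> V) : Prop :=
  forall y : V, exists! a : nat -> R, bpsum a v @ \oo --> y.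

Definition ban_normalized (V : normedModType R) (v : nat -> V) : Prop :=
  forall n, `|v n| = 1.

Definition ban_one_unconditional (V : normedModType R) (v : nat -> V) : Prop :=
  forall (n : nat) (a : nat -> R) (s : nat -> bool),
    `|\sum_(i < n) ((-1) ^+ s i * a i) *: v i| = `|\sum_(i < n) a i *: v i|.

Definition ban_monotone (V : normedModType R) (v : nat -> V) : Prop :=
  forall (a : nat -> R) (m n : nat), (m <= n)%N -> `|bpsum a v m| <= `|bpsum a v n|.

Definition ban_boundedly_complete (V : normedModType R) (v : nat -> V) : Prop :=
  forall a : nat -> R, (exists M : R, forall n, `|bpsum a v n| <= M) ->
    exists l : V, bpsum a v @ \oo --> l.

Definition ban_quotient_map (V W : normedModType R) (Q : V -> W) : Prop :=
  forall y : W, (exists z, Q z = y) /\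
    `|y| = inf [set `|z| | z in [set z | Q z = y]].

(* Finite families of intervals I_1 < ... < I_k in N, coded as lists of pairs
   (min I_j, max I_j). *)
Definition ban_admissible (s : seq (nat * nat)) : bool :=
  all (fun p => (p.1 <= p.2)%N) s && sorted (fun p q => (p.2 < q.1)%N) s.

Definition block_vec (X U : normedModType R) (x : nat -> X) (u : nat -> U)
  (a : nat -> R) (s : seq (nat * nat)) : U :=
  \sum_(p <- s) `|\sum_(p.1 <= i < p.2.+1) a i *: x i| *: u p.1.

(* the norm ||a||_Z on c00 (the max, written as a sup) *)
Definition Znorm (X U : normedModType R) (x : nat -> X) (u : nat -> U)
  (a : nat -> R) : R :=
  sup [set `|block_vec x u a s| | s in [set s | ban_admissible s]].

End Defs.

(* Main.v *)
Require Import Defs.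
From HB Require Import structures.
From mathcomp Require Import all_boot all_order all_algebra.
From mathcomp Require Import all_classical all_reals all_analysis.
Set Implicit Arguments. Unset Strict Implicit. Unset Printing Implicit Defensive.
Import Order.TTheory GRing.Theory Num.Theory.
Import numFieldNormedType.Exports.
Local Open Scope classical_set_scope.
Local Open Scope ring_scope.
From mathcomp Require Import zify ring lra.
Section Gen.
Variable R : realType.

Lemma cvg_epsN (W : normedModType R) (s : nat -> W) l :
  s @ \oo --> l -> forall e : R, 0 < e -> exists N, forall n, (N <= n)%N -> `|l - s n| < e.
Proof.
move=> /cvgrPdist_lt H e e0. have := H e e0. case=> N _ HN. exists N => n Hn. exact: HN.
Qed.
Lemma epsN_cvg (W : normedModType R) (s : nat -> W) l :
  (forall e : R, 0 < e -> exists N, forall n, (N <= n)%N -> `|l - s n| < e) -> s @ \oo --> l.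
Proof.
move=> H. apply/cvgrPdist_lt => e e0. have [N HN] := H e e0. exists N => //.
Qed.
Lemma cauchy_seq (W : completeNormedModType R) (s : nat -> W) :
  (forall e : R, 0 < e -> exists N, forall n, (N <= n)%N -> `|s N - s n| < e) ->
  exists l : W, s @ \oo --> l.
Proof.
move=> H.
have : [cvg (s @ \oo) in W].
  apply: (@cauchy_cvg W (s @ \oo)). apply: cauchy_exP => e e0.
  have [N HN] := H e e0. exists (s N). exists N => // n /= Hn.
  rewrite -ball_normE /=. exact: HN.
by move=> c; exists (lim (s @ \oo)); exact: c.
Qed.
Lemma eps_le (a b : R) : (forall e, 0 < e -> a <= b + e) -> a <= b.
Proof. by move=> H; apply/ler_addgt0Pr. Qed.
Lemma norm_eps0 (W : normedModType R) (d : W) : (forall e : R, 0 < e -> `|d| <= e) -> d = 0.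
Proof.
move=> H. apply/normr0_eq0/eqP. rewrite eq_le normr_ge0 andbT.
apply: eps_le => e e0; rewrite add0r; exact: H.
Qed.
End Gen.
Definition rr (p q : nat * nat) : bool := (p.2 < q.1)%N.
Definition okp (p : nat * nat) : bool := (p.1 <= p.2)%N.
Definition rr' (p q : nat * nat) : bool := [&& okp p, rr p q & okp q].

Lemma rr'_trans : transitive rr'.
Proof. move=> q p r /and3P[h1 h2 h3] /and3P[h4 h5 h6]; apply/and3P; rewrite /rr /okp in h1 h2 h3 h4 h5 h6 *; split => //; lia. Qed.

Lemma adm_iff (s : seq (nat * nat)) :
  ban_admissible s = all okp s && pairwise rr s.
Proof.
rewrite /ban_admissible. apply/andP/andP => -[ha hs]; split => //.
- have h1 : sorted rr' s.
    apply: (sub_in_sorted (P := okp) _ ha hs) => p q hp hq hr; apply/and3P; split => //.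
  rewrite (sorted_pairwise rr'_trans) in h1.
  by apply: sub_pairwise h1 => p q /and3P[].
- by have := pairwise_sorted hs.
Qed.

Lemma sum_window (V : nmodType) (F : nat -> V) a b K : (b <= K)%N ->
  \sum_(a <= i < b) F i = \sum_(0 <= i < K | (a <= i < b)%N) F i.
Proof.
move=> hb. rewrite (big_nat_widen _ _ _ _ _ hb) (big_nat_widenl _ _ _ _ _ (leq0n a)).
by apply: eq_bigl => i /=; lia.
Qed.

Definition T (R : realType) (n0 n : nat) (a : nat -> R) := fun i => if (n0 <= i < n)%N then a i else 0.

Lemma T0 (R : realType) n (a : nat -> R) : (fun i => if (i < n)%N then a i else 0) = T 0 n a.
Proof. by []. Qed.

Section ZN.
Variable R : realType.
Variables (X U : normedModType R) (x : nat -> X) (u : nat -> U).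
Hypothesis Hx : forall n, `|x n| = 1.
Hypothesis Hu : forall n, `|u n| = 1.

Lemma G2 (V : lmodType R) (v : nat -> V) (a : nat -> R) n0 n lo hi :
  \sum_(lo <= i < hi) T n0 n a i *: v i = \sum_(maxn lo n0 <= i < minn hi n) a i *: v i.
Proof.
rewrite (sum_window _ _ (leqnn hi)) (sum_window _ _ (geq_minl hi n)).
rewrite [LHS]big_mkcond [RHS]big_mkcond; apply: eq_bigr => i _ /=.
rewrite /T.
have -> : (maxn lo n0 <= i < minn hi n)%N = (lo <= i < hi)%N && (n0 <= i < n)%N by lia.
by case: (lo <= i < hi)%N; case: (n0 <= i < n)%N; rewrite ?scale0r.
Qed.

Lemma inner_le a n0 n (p : nat * nat) :
  `|\sum_(p.1 <= i < p.2.+1) T n0 n a i *: x i| <=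
  \sum_(0 <= i < n) (if (p.1 <= i <= p.2)%N then `|a i| else 0).
Proof.
rewrite G2. apply: le_trans (ler_norm_sum _ _ _) _.
under eq_bigr => i _ do rewrite normrZ Hx mulr1.
rewrite (sum_window _ _ (geq_minr p.2.+1 n)) [X in X <= _]big_mkcond /=.
apply: ler_sum => i _.
have [h|h] := boolP (maxn p.1 n0 <= i < minn p.2.+1 n)%N.
  have -> : (p.1 <= i <= p.2)%N by lia.
  by [].
case: ifP => _ //.
Qed.

Lemma disj_count (f : R) i (s : seq (nat * nat)) : 0 <= f -> pairwise rr s ->
  \sum_(p <- s) (if (p.1 <= i <= p.2)%N then f else 0) <= f.
Proof.
move=> hf; elim: s => [|[p1 p2] s IH]; first by rewrite big_nil.
rewrite /= big_cons => /andP[hall hs] /=.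
case: ifP => hi.
  rewrite big1_seq ?addr0 // => -[q1 q2] /andP[_ hq].
  have := allP hall _ hq; rewrite /rr /= => hpq.
  have -> : (q1 <= i <= q2)%N = false by lia.
  by [].
by rewrite add0r; apply: IH.
Qed.

Lemma blk_le a n0 n s : pairwise rr s ->
  `|block_vec x u (T n0 n a) s| <= \sum_(0 <= i < n) `|a i|.
Proof.
move=> hs; rewrite /block_vec. apply: le_trans (ler_norm_sum _ _ _) _.
under eq_bigr => p _ do rewrite normrZ Hu mulr1 normr_id.
apply: le_trans (ler_sum _ (fun p _ => inner_le a n0 n p)) _.
rewrite exchange_big /=. apply: ler_sum => i _. apply: disj_count => //.
Qed.

Lemma Zn_ub a n0 n : Znorm x u (T n0 n a) <= \sum_(0 <= i < n) `|a i|.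
Proof.
rewrite /Znorm; apply: ge_sup.
  by exists `|block_vec x u (T n0 n a) [::]|; exists [::].
move=> y [s hs <-]. apply: blk_le. by move: hs; rewrite /= adm_iff => /andP[].
Qed.

Lemma Zn_ge a n0 n s : ban_admissible s ->
  `|block_vec x u (T n0 n a) s| <= Znorm x u (T n0 n a).
Proof.
move=> hs; rewrite /Znorm; apply: ub_le_sup; last by exists s.
exists (\sum_(0 <= i < n) `|a i|) => y [s' hs' <-]. apply: blk_le.
by move: hs'; rewrite /= adm_iff => /andP[].
Qed.

Lemma Zn_ge0 a n0 n : 0 <= Znorm x u (T n0 n a).
Proof.
apply: le_trans (Zn_ge a n0 n (s:=[::]) erefl). by [].
Qed.
End ZN.

Section Trim.
Variable R : realType.
Variables (X U : normedModType R) (x : nat -> X) (u : nat -> U).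
Hypothesis Hx : forall n, `|x n| = 1.
Hypothesis Hu : forall n, `|u n| = 1.

Definition inside n0 m (s : seq (nat * nat)) := all (fun p => (n0 <= p.1)%N && (p.2 < m)%N) s.
Definition hi_of n0 m (s : seq (nat * nat)) :=
  map (fun p => (p.1, minn p.2 m.-1)) (seq.filter (fun p => (n0 <= p.1)%N && (p.1 < m)%N) s).
Definition lo_of n0 m (s : seq (nat * nat)) :=
  map (fun p => (n0, minn p.2 m.-1)) (seq.filter (fun p => (p.1 < n0)%N && (n0 <= p.2)%N) s).

Lemma hi_adm n0 m s : ban_admissible s -> ban_admissible (hi_of n0 m s) && inside n0 m (hi_of n0 m s).
Proof.
rewrite !adm_iff => /andP[ha hs]; rewrite /hi_of /inside !all_map.
apply/andP; split; [apply/andP; split|].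
- apply/allP => -[p1 p2] /=; rewrite mem_filter /= => /andP[h1 h2].
  have := allP ha _ h2; rewrite /okp /=; lia.
- rewrite pairwise_map; apply: pairwise_filter; apply: sub_pairwise hs.
  move=> [p1 p2] [q1 q2]; rewrite /rr /=; lia.
- apply/allP => -[p1 p2] /=; rewrite mem_filter /= => /andP[h1 h2]; lia.
Qed.

Lemma lo_adm n0 m s : (n0 < m)%N -> ban_admissible s -> ban_admissible (lo_of n0 m s) && inside n0 m (lo_of n0 m s).
Proof.
move=> hnm; rewrite !adm_iff => /andP[ha hs]; rewrite /lo_of /inside !all_map.
apply/andP; split; [apply/andP; split|].
- apply/allP => -[p1 p2] /=; rewrite mem_filter /= => /andP[h1 h2].
  rewrite /okp /=; lia.
- rewrite pairwise_map.
  apply: (sub_in_pairwise (P := (fun p => (p.1 < n0)%N && (n0 <= p.2)%N)) _ _ (pairwise_filter _ hs)).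
  + move=> [p1 p2] [q1 q2]; rewrite /in_mem /rr /= => h1 h2 h3; lia.
  + by apply/allP => p; rewrite mem_filter => /andP[].
- apply/allP => -[p1 p2] /=; rewrite mem_filter /= => /andP[h1 h2]; lia.
Qed.

Lemma trim a n0 m L s : (n0 < m)%N -> (m <= L)%N ->
  `|block_vec x u (T n0 m a) s| <=
  `|block_vec x u (T 0 L a) (hi_of n0 m s)| + `|block_vec x u (T 0 L a) (lo_of n0 m s)|.
Proof.
move=> hnm hmL; rewrite /block_vec.
under eq_bigr => p _ do rewrite G2.
rewrite (bigID (fun p => (n0 <= p.1)%N)) /=.
apply: le_trans (ler_normD _ _) _. apply: lerD.
  rewrite /hi_of big_map big_filter.
  rewrite (bigID (fun p => (p.1 < m)%N)) /= [X in _ + X]big1 ?addr0; last first.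
    move=> p /andP[_ hp]; rewrite big_geq ?normr0 ?scale0r //; lia.
  rewrite le_eqVlt; apply/orP; left; apply/eqP; congr (`| _ |).
  apply: eq_bigr => p /andP[h1 h2]; rewrite G2 /=.
  congr (`| _ | *: _); congr (\sum_(_ <= _ < _) _); lia.
rewrite (bigID (fun p => (n0 <= p.2)%N)) /= [X in _ + X]big1 ?addr0; last first.
  move=> p /andP[_ hp]; rewrite big_geq ?normr0 ?scale0r //; lia.
apply: le_trans (ler_norm_sum _ _ _) _.
rewrite (eq_bigr (fun p => `|\sum_(maxn p.1 n0 <= i0 < minn p.2.+1 m) a i0 *: x i0|)); last by move=> p _; rewrite normrZ Hu mulr1 normr_id.
rewrite /lo_of big_map big_filter /= -scaler_suml normrZ Hu mulr1 ger0_norm; last first.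
  by apply: sumr_ge0 => p _; apply: normr_ge0.
rewrite le_eqVlt; apply/orP; left; apply/eqP.
apply: eq_big => p; first by rewrite /=; lia.
move=> /andP[h1 h2]; rewrite G2 /=.
congr (`| _ |); congr (\sum_(_ <= _ < _) _); lia.
Qed.
End Trim.

Section BP.
Variable R : realType.
Variable V : normedModType R.
Implicit Types (v : nat -> V) (a b : nat -> R).

Lemma bpsum_ext a b v n : (forall i, (i < n)%N -> a i = b i) -> bpsum a v n = bpsum b v n.
Proof. by move=> h; apply: eq_bigr => i _; rewrite h. Qed.

Lemma bpsumE a v n : bpsum a v n = \sum_(0 <= i < n) a i *: v i.
Proof. by rewrite /bpsum big_mkord. Qed.

Lemma bpsumT a v n N : (n <= N)%N -> bpsum a v n = bpsum (T 0 n a) v N.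
Proof.
move=> hn; rewrite !bpsumE G2 maxnn. have -> : minn N n = n by lia.
by [].
Qed.

Lemma bpsumD a b v n : bpsum (fun i => a i + b i) v n = bpsum a v n + bpsum b v n.
Proof. by rewrite /bpsum -big_split /=; apply: eq_bigr => i _; rewrite scalerDl. Qed.

Lemma bpsumZ c a v n : bpsum (fun i => c * a i) v n = c *: bpsum a v n.
Proof. by rewrite /bpsum scaler_sumr; apply: eq_bigr => i _; rewrite scalerA. Qed.

Lemma bpsumN a v n : bpsum (fun i => - a i) v n = - bpsum a v n.
Proof. by rewrite /bpsum -sumrN; apply: eq_bigr => i _; rewrite scaleNr. Qed.

Lemma bpsumB a b v n : bpsum (fun i => a i - b i) v n = bpsum a v n - bpsum b v n.
Proof. by rewrite bpsumD bpsumN. Qed.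

Lemma bpsumS a v n : bpsum a v n.+1 = bpsum a v n + a n *: v n.
Proof. by rewrite /bpsum big_ord_recr. Qed.

Lemma bpsum_delta v n : bpsum (fun i => if i == n then 1 else 0) v n.+1 = v n.
Proof.
rewrite bpsumS eqxx scale1r /bpsum big1 ?add0r // => i _.
by rewrite (ltn_eqF (ltn_ord i)) scale0r.
Qed.
End BP.

Section ZZ.
Variable R : realType.
Variables (X U Z : normedModType R) (x : nat -> X) (u : nat -> U) (e : nat -> Z).
Hypothesis Hx : forall n, `|x n| = 1.
Hypothesis Hu : forall n, `|u n| = 1.
Hypothesis H : forall (n : nat) (a : nat -> R),
     `|bpsum a e n| = Znorm x u (fun i => if (i < n)%N then a i else 0).

Lemma HT n a : `|bpsum a e n| = Znorm x u (T 0 n a).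
Proof. by rewrite H. Qed.

Lemma F2 a n : `|bpsum a x n| <= `|bpsum a e n|.
Proof.
case: n => [|k]; first by rewrite /bpsum big_ord0 normr0.
rewrite HT; apply: le_trans (Zn_ge Hx Hu a 0 k.+1 (s := [:: (0, k)%N]) _); last first.
  by rewrite /ban_admissible /=; lia.
rewrite /block_vec big_cons big_nil addr0 normrZ Hu mulr1 normr_id G2 /=.
by rewrite maxnn minnn bpsumE.
Qed.

Lemma F3 : ban_monotone e.
Proof.
move=> a m n hmn; rewrite !HT.
case: m hmn => [|m] hmn.
  apply: le_trans (Zn_ub Hx Hu a 0 0) _; rewrite big_geq //; exact: Zn_ge0.
rewrite /Znorm; apply: ge_sup.
  by exists `|block_vec x u (T 0 m.+1 a) [::]|; exists [::].
move=> y [s hs <-].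
apply: le_trans (trim x Hu a (n0:=0) (m:=m.+1) (L:=n) s (ltn0Sn m) hmn) _.
have -> : block_vec x u (T 0 n a) (lo_of 0 m.+1 s) = 0.
  by rewrite /block_vec /lo_of big_map big_filter big1 // => p; rewrite ltn0.
rewrite normr0 addr0. have /andP[h1 _] := hi_adm 0 m.+1 hs.
exact: Zn_ge.
Qed.

Lemma norm_e n : `|e n| = 1.
Proof.
apply/eqP; rewrite eq_le; apply/andP; split.
  rewrite -(bpsum_delta e n) HT. apply: le_trans (Zn_ub Hx Hu _ 0 n.+1) _.
  rewrite big_nat_recr //= eqxx normr1 big1_seq ?add0r // => i /andP[_].
  by rewrite mem_index_iota => /andP[_ hi]; rewrite (ltn_eqF hi) normr0.
by rewrite -{1}(Hx n) -(bpsum_delta x n) -(bpsum_delta e n); apply: F2.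
Qed.

Lemma coef_le a n i : (i < n)%N -> `|a i| <= 2 * `|bpsum a e n|.
Proof.
move=> hi.
have -> : `|a i| = `|bpsum a e i.+1 - bpsum a e i|.
  by rewrite bpsumS addrAC subrr add0r normrZ norm_e mulr1.
apply: le_trans (ler_normB _ _) _.
by rewrite mulr2n mulrDl mul1r lerD // F3 // ltnW.
Qed.
End ZZ.

Lemma arch (R : realType) (d : R) : 0 < d -> exists N, forall k, (N <= k)%N -> (k.+1%:R)^-1 < d.
Proof.
move=> d0; exists (Num.Def.archi_bound d^-1) => k hk.
rewrite invf_plt ?posrE ?ltr0Sn //.
apply: lt_le_trans (archi_boundP _) _; first by rewrite invr_ge0 ltW.
by rewrite ler_nat; apply: leq_trans hk (leqnSn k).
Qed.

Lemma small (R : realType) (W : normedModType R) (d : W) (K : R) : 0 <= K ->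
  (forall eta : R, 0 < eta -> `|d| <= K * eta) -> d = 0.
Proof.
move=> K0 h; apply: norm_eps0 => eps e0.
have K1 : 0 < K + 1 by rewrite ltr_pwDr.
apply: le_trans (h (eps / (K + 1)) _) _; first by rewrite divr_gt0.
have -> : K * (eps / (K + 1)) = eps - eps / (K + 1).
  by field; rewrite gt_eqF.
by rewrite lerBlDr lerDl divr_ge0 // ltW.
Qed.

Definition mkLin (R : realType) (Z X : normedModType R) (f : Z -> X) (H : linear f) : {linear Z -> X} :=
  HB.pack f (GRing.isLinear.Build _ _ _ _ f H).
Lemma mkLinE (R : realType) (Z X : normedModType R) (f : Z -> X) (H : linear f) z : mkLin H z = f z.
Proof. by []. Qed.

Section Ext.
Variable R : realType.
Variables (Z : normedModType R) (W : completeNormedModType R) (e : nat -> Z).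
Hypothesis dens : forall (z : Z) (eps : R), 0 < eps ->
  exists (n : nat) (a : nat -> R), `|z - bpsum a e n| < eps.
Variable F : (nat -> R) -> nat -> W.
Variable C : R.
Hypothesis C0 : 0 <= C.
Hypothesis FT : forall a n N, (n <= N)%N -> F a n = F (T 0 n a) N.
Hypothesis FL : forall c a b n, F (fun i => c * a i + b i) n = c *: F a n + F b n.
Hypothesis FN : forall a n, `|F a n| <= C * `|bpsum a e n|.

Lemma FB a b n : F (fun i => a i - b i) n = F a n - F b n.
Proof.
have := FL (-1) b a n; rewrite scaleN1r.
have -> : (fun i => -1 * b i + a i) = (fun i => a i - b i).
  by apply: funext => i; rewrite mulN1r addrC.
by rewrite addrC.
Qed.

Lemma FLip a n b m : `|F a n - F b m| <= C * `|bpsum a e n - bpsum b e m|.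
Proof.
rewrite (FT a (leq_maxl n m)) (FT b (leq_maxr n m)) -FB.
rewrite (bpsumT a e (leq_maxl n m)) (bpsumT b e (leq_maxr n m)) -bpsumB. exact: FN.
Qed.

Lemma ext_pt (z : Z) : exists w : W, forall a n, `|w - F a n| <= C * `|z - bpsum a e n|.
Proof.
have dens2 : forall k : nat, exists p : nat * (nat -> R), `|z - bpsum p.2 e p.1| < (k.+1%:R)^-1.
  move=> k; have [n [a h]] : exists n a, `|z - bpsum a e n| < (k.+1%:R)^-1 by apply: dens; rewrite invr_gt0 ltr0Sn.
  by exists (n, a).
have [g hg] := choice dens2.
pose fk k := F (g k).2 (g k).1.
pose wk k := bpsum (g k).2 e (g k).1.
have C1 : 0 < C + 1 by rewrite ltr_pwDr.
have [l hl] : exists l : W, fk @ \oo --> l.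
  apply: cauchy_seq => eps e0.
  have d0 : 0 < eps / (2 * (C + 1)) by rewrite divr_gt0 // mulr_gt0.
  have [N hN] := arch d0.
  exists N => k hk.
  apply: le_lt_trans (FLip _ _ _ _) _.
  change (C * `|wk N - wk k| < eps).
  have h1 : `|wk N - wk k| <= `|z - wk N| + `|z - wk k|.
    by rewrite (distrC z (wk N)); apply: ler_distD.
  have h2 := hg N; have h3 := hg k.
  have h4 := hN N (leqnn N); have h5 := hN k hk.
  have h6 : eps / (2 * (C + 1)) * (2 * (C + 1)) = eps by rewrite divfK // gt_eqF // mulr_gt0.
  rewrite -/(wk N) in h2. rewrite -/(wk k) in h3.
  set p := `|z - wk N| in h1 h2. set q := `|z - wk k| in h1 h3.
  set A := `|wk N - wk k| in h1 *. set d := eps / (2 * (C + 1)) in d0 h4 h5 h6.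
  have hA : 0 <= A by apply: normr_ge0.
  set tN := (N.+1%:R)^-1 in h2 h4. set tk := (k.+1%:R)^-1 in h3 h5. clearbody p q A d tN tk.   have hh : C * A <= C * (2 * d) by apply: ler_wpM2l => //; lra.
  nra.
exists l => a n; apply: eps_le => eps e0.
have e2 : 0 < eps / 2 by rewrite divr_gt0.
have [K hK] := cvg_epsN hl e2.
have d0 : 0 < eps / (2 * (C + 1)) by rewrite divr_gt0 // mulr_gt0.
have [N hN] := arch d0.
pose k := maxn K N.
have h1 := hK k (leq_maxl K N).
have h2 := hN k (leq_maxr K N).
have h3 := hg k.
have h4 := FLip (g k).2 (g k).1 a n.
have h5 : `|wk k - bpsum a e n| <= `|z - wk k| + `|z - bpsum a e n|.
  by rewrite (distrC z (wk k)); apply: ler_distD.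
have h6 : eps / (2 * (C + 1)) * (2 * (C + 1)) = eps by rewrite divfK // gt_eqF // mulr_gt0.
have h7 : eps / 2 * 2 = eps by rewrite divfK.
have h8 := ler_distD (fk k) l (F a n).
rewrite /fk in h1 h8. rewrite -/(wk k) in h3 h4.
set p := `|z - wk k| in h3 h5.
set q := `|z - bpsum a e n| in h5 *.
set A := `|wk k - bpsum a e n| in h4 h5.
set B := `|F (g k).2 (g k).1 - F a n| in h4 h8.
set L := `|l - F (g k).2 (g k).1| in h1 h8.
set d := eps / (2 * (C + 1)) in d0 h2 h6.
set t := (k.+1%:R)^-1 in h2 h3.
set e2' := eps / 2 in e2 h1 h7.
have hq : 0 <= q by apply: normr_ge0.
have hp : 0 <= p by apply: normr_ge0.
clearbody p q A B L d t e2'.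
have hh1 : C * A <= C * (p + q) by apply: ler_wpM2l.
have hh2 : C * p <= C * d by apply: ler_wpM2l => //; lra.
nra.
Qed.

Lemma ext : exists f : Z -> W, forall z a n, `|f z - F a n| <= C * `|z - bpsum a e n|.
Proof. have [f hf] := choice ext_pt. by exists f. Qed.

Variable f : Z -> W.
Hypothesis KP : forall z a n, `|f z - F a n| <= C * `|z - bpsum a e n|.

Lemma f_on a n : f (bpsum a e n) = F a n.
Proof.
apply/eqP; rewrite -subr_eq0 -normr_eq0 eq_le normr_ge0 andbT.
by have := KP (bpsum a e n) a n; rewrite subrr normr0 mulr0.
Qed.

Lemma F0 n : F (fun _ => 0) n = 0.
Proof.
by have := FB (fun _ => 0) (fun _ => 0) n; rewrite !subrr.
Qed.

Lemma f_bound z : `|f z| <= C * `|z|.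
Proof.
have := KP z (fun _ => 0) 0; rewrite F0 subr0.
have -> : bpsum (fun _ => (0 : R)) e 0 = 0 by rewrite /bpsum big_ord0.
by rewrite subr0.
Qed.

Lemma f_lin : linear f.
Proof.
move=> c z1 z2; apply/eqP; rewrite -subr_eq0; apply/eqP; apply: (@small _ _ _ (2 * C * (`|c| + 1))).
  by rewrite mulr_ge0 // ?mulr_ge0 // addr_ge0.
move=> eta eta0.
have [n1 [a1 h1]] := dens z1 eta0.
have [n2 [a2 h2]] := dens z2 eta0.
pose N := maxn n1 n2.
pose b := fun i => c * T 0 n1 a1 i + T 0 n2 a2 i.
have Eb : bpsum b e N = c *: bpsum a1 e n1 + bpsum a2 e n2.
  rewrite /b bpsumD bpsumZ -(bpsumT a1 e (leq_maxl n1 n2)) -(bpsumT a2 e (leq_maxr n1 n2)) //.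
have EF : F b N = c *: F a1 n1 + F a2 n2.
  by rewrite /b FL -(FT a1 (leq_maxl n1 n2)) -(FT a2 (leq_maxr n1 n2)).
have k1 := KP (c *: z1 + z2) b N.
have k2 := KP z1 a1 n1.
have k3 := KP z2 a2 n2.
rewrite Eb EF in k1.
have t1 : `|c *: z1 + z2 - (c *: bpsum a1 e n1 + bpsum a2 e n2)| <=
    `|c| * `|z1 - bpsum a1 e n1| + `|z2 - bpsum a2 e n2|.
  rewrite opprD addrACA -scalerBr. apply: le_trans (ler_normD _ _) _. by rewrite normrZ.
have t2 : `|f (c *: z1 + z2) - (c *: f z1 + f z2)| <=
   `|f (c *: z1 + z2) - (c *: F a1 n1 + F a2 n2)| + `|c| * `|F a1 n1 - f z1| + `|F a2 n2 - f z2|.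
  apply: le_trans (ler_distD (c *: F a1 n1 + F a2 n2) _ _) _.
  rewrite -[X in _ <= X]addrA lerD2l opprD addrACA -scalerBr.
  apply: le_trans (ler_normD _ _) _. by rewrite normrZ.
rewrite distrC in k2. rewrite distrC in k3.
set A := `|c *: z1 + z2 - (c *: bpsum a1 e n1 + bpsum a2 e n2)| in k1 t1.
set p := `|z1 - bpsum a1 e n1| in h1 k2 t1.
set q := `|z2 - bpsum a2 e n2| in h2 k3 t1.
set G1 := `|f (c *: z1 + z2) - (c *: F a1 n1 + F a2 n2)| in k1 t2.
set G2 := `|F a1 n1 - f z1| in k2 t2.
set G3 := `|F a2 n2 - f z2| in k3 t2.
have hc : 0 <= `|c| by apply: normr_ge0.
have hp : 0 <= p by apply: normr_ge0.
have hq : 0 <= q by apply: normr_ge0.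
set D := `|f (c *: z1 + z2) - (c *: f z1 + f z2)| in t2 *.
set cc := `|c| in t1 t2 hc *.
clearbody A p q G1 G2 G3 D cc.
have hh1 : C * A <= C * (cc * p + q) by apply: ler_wpM2l.
have hh2 : cc * G2 <= cc * (C * p) by apply: ler_wpM2l.
have hh3 : C * cc * p <= C * cc * eta by apply: ler_wpM2l; [apply: mulr_ge0|apply: ltW].
have hh4 : C * q <= C * eta by apply: ler_wpM2l => //; apply: ltW.
lra.
Qed.
End Ext.

Section BP2.
Variable R : realType.
Variable V : normedModType R.
Lemma bpsumT' (a : nat -> R) (v : nat -> V) n K : bpsum (T 0 n a) v K = bpsum a v (minn n K).
Proof. by rewrite !bpsumE G2 maxnn minnC. Qed.
End BP2.

Section PartI.
Variable R : realType.
Variables (X U Z : completeNormedModType R) (x : nat -> X) (u : nat -> U) (e : nat -> Z).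
Hypothesis Hx : forall n, `|x n| = 1.
Hypothesis Hu : forall n, `|u n| = 1.
Hypothesis H : forall (n : nat) (a : nat -> R),
     `|bpsum a e n| = Znorm x u (fun i => if (i < n)%N then a i else 0).
Hypothesis dens : forall (z : Z) (eps : R), 0 < eps ->
  exists (n : nat) (a : nat -> R), `|z - bpsum a e n| < eps.

Lemma coef_ext : exists cf : nat -> Z -> R, forall i z a n,
  `|cf i z - T 0 n a i| <= 2 * `|z - bpsum a e n|.
Proof.
have h : forall i, exists f : Z -> R, forall z a n, `|f z - T 0 n a i| <= 2 * `|z - bpsum a e n|.
  move=> i. apply: (@ext R Z R e dens (fun a n => T 0 n a i) 2) => //.
  - move=> a n N hn; rewrite /T /=; have [h1|h1] := ltnP i n; have [h2|h2] := ltnP i N => //; lia.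
  - move=> c a b n; rewrite /T /=; case: ifP => _ //; by rewrite scaler0 addr0.
  - move=> a n; rewrite /T; case: ifP => h1.
      exact: (coef_le Hx Hu H).
    by rewrite normr0 mulr_ge0.
have [cf hcf] := choice h. by exists cf.
Qed.

Lemma proj_ext : exists P : nat -> Z -> Z, forall m z a n,
  `|P m z - bpsum a e (minn m n)| <= 1 * `|z - bpsum a e n|.
Proof.
have h : forall m, exists f : Z -> Z, forall z a n,
    `|f z - bpsum a e (minn m n)| <= 1 * `|z - bpsum a e n|.
  move=> m. apply: (@ext R Z Z e dens (fun a n => bpsum a e (minn m n)) 1) => //.
  - move=> a n N hn /=; rewrite bpsumT'; congr bpsum; lia.
  - by move=> c a b n /=; rewrite bpsumD bpsumZ.
  - move=> a n /=; rewrite mul1r; apply: (F3 Hx Hu H); exact: geq_minr.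
have [P hP] := choice h. by exists P.
Qed.

Lemma schauder_e : ban_schauder_basis e.
Proof.
have [cf hcf] := coef_ext.
have [P hP] := proj_ext.
have key : forall z m, bpsum (fun i => cf i z) e m = P m z.
  move=> z m; apply/eqP; rewrite -subr_eq0; apply/eqP.
  apply: (@small _ _ _ (1 + 2 * m%:R)); first by rewrite addr_ge0 // mulr_ge0.
  move=> eta eta0; have [n [a ha]] := dens z eta0.
  have E1 : bpsum (T 0 n a) e m = bpsum a e (minn m n) by rewrite bpsumT' minnC.
  have h1 := hP m z a n.
  have h2 : `|bpsum (fun i => cf i z) e m - bpsum (T 0 n a) e m| <= 2 * m%:R * eta.
    rewrite -bpsumB /bpsum. apply: le_trans (ler_norm_sum _ _ _) _.
    under eq_bigr => i _ do rewrite normrZ (norm_e Hx Hu H) mulr1.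
    apply: (@le_trans _ _ (\sum_(i < m) 2 * `|z - bpsum a e n|)); first by apply: ler_sum => i _; exact: hcf.
    rewrite sumr_const card_ord -[_ *+ m]mulr_natr. have hM : 0 <= (m%:R : R) by []. have hq := ltW ha. set q := `|z - bpsum a e n| in hq *. set M := (m%:R : R) in hM *. clearbody q M. nra.
  rewrite -E1 in h1.
  have h3 : `|bpsum (fun i => cf i z) e m - P m z| <=
      `|bpsum (fun i => cf i z) e m - bpsum (T 0 n a) e m| + `|P m z - bpsum (T 0 n a) e m|.
    rewrite (distrC (P m z)). exact: ler_distD.
  rewrite mul1r in h1.
  set A := `|_ - P m z| in h3 *. set B := `|_ - bpsum (T 0 n a) e m| in h2 h3.
  set D := `|P m z - _| in h1 h3. set q := `|z - bpsum a e n| in ha h1.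
  clearbody A B D q. lra.
move=> z; exists (fun i => cf i z); split.
  apply: epsN_cvg => eps e0.
  have e2 : 0 < eps / 2 by rewrite divr_gt0.
  have [n [a ha]] := dens z e2.
  exists n => m hm. rewrite key.
  have h1 := hP m z a n. rewrite mul1r (_ : minn m n = n) in h1; last by lia.
  have h2 := ler_distD (bpsum a e n) z (P m z).
  rewrite (distrC (bpsum a e n) (P m z)) in h2.
  have h7 : eps / 2 * 2 = eps by rewrite divfK.
  set A := `|z - P m z| in h2 *. set p := `|z - bpsum a e n| in ha h1 h2.
  set D := `|P m z - bpsum a e n| in h1 h2. set t := eps / 2 in e2 ha h7.
  clearbody A p D t. lra.
move=> b hb; apply: funext => i; apply/eqP; rewrite -subr_eq0; apply/eqP.
apply: norm_eps0 => eps e0.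
have e2 : 0 < eps / 2 by rewrite divr_gt0.
have [N hN] := cvg_epsN hb e2.
pose m := maxn N i.+1.
have h1 := hN m (leq_maxl N i.+1).
have h2 := hcf i z b m.
rewrite (_ : T 0 m b i = b i) in h2; last by rewrite /T /= (_ : (i < m)%N = true) //; lia.
have h7 : eps / 2 * 2 = eps by rewrite divfK.
set A := `|cf i z - b i| in h2 *. set p := `|z - bpsum b e m| in h1 h2.
set t := eps / 2 in e2 h1 h7. clearbody A p t. lra.
Qed.
End PartI.

Lemma geo (R : realType) (N m : nat) :
  \sum_(N <= j < N + m) ((2:R)^-1) ^+ j.+1 = (2^-1) ^+ N - (2^-1) ^+ (N + m).
Proof.
elim: m => [|m IH]; first by rewrite addn0 big_geq // subrr.
rewrite addnS big_nat_recr /=; last by rewrite leq_addr.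
rewrite IH exprS.
set t := (2^-1 : R) ^+ (N + m). set s := (2^-1 : R) ^+ N. by field.
Qed.

Lemma hpow (R : realType) n : ((2:R)^-1) ^+ n <= (n.+1%:R)^-1.
Proof.
rewrite exprVn lef_pV2 ?posrE ?exprn_gt0 ?ltr0Sn //.
rewrite -natrX ler_nat. exact: ltn_expl.
Qed.

Section Lift.
Variable R : realType.
Variables (X Z : completeNormedModType R) (x : nat -> X) (e : nat -> Z).
Hypothesis Hx : forall n, `|x n| = 1.
Hypothesis He : forall n, `|e n| = 1.
Hypothesis Hsph : forall y : X, `|y| = 1 -> forall eps : R, 0 < eps ->
     exists n, `|y - x n| < eps \/ `|y + x n| < eps.
Variable Q : {linear Z -> X}.
Hypothesis Qe : forall n, Q (e n) = x n.
Hypothesis Qb : forall z, `|Q z| <= `|z|.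

Lemma step (r : X) (eps : R) : 0 < eps ->
  exists p : R * nat, `|p.1| <= `|r| /\ `|r - p.1 *: x p.2| < eps.
Proof.
move=> e0; have [->|r0] := eqVneq r 0.
  by exists (0, 0%N); rewrite /= normr0 scale0r subr0 normr0.
have nr : 0 < `|r| by rewrite normr_gt0.
have hy : `|(`|r|^-1 *: r)| = 1 by rewrite normrZ normfV normr_id mulVf // gt_eqF.
have E : r = `|r| *: (`|r|^-1 *: r) by rewrite scalerA divff ?scale1r // gt_eqF.
have [n [hn|hn]] := Hsph hy (divr_gt0 e0 nr).
  exists (`|r|, n); split; first by rewrite /= normr_id.
  rewrite /=.
  rewrite {1}E -scalerBr normrZ normr_id.
  by rewrite -ltr_pdivlMl // mulrC.
exists (- `|r|, n); split; first by rewrite /= normrN normr_id.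
rewrite /= {1}E scaleNr opprK -scalerDr normrZ normr_id.
by rewrite -ltr_pdivlMl // mulrC.
Qed.

Fixpoint resid (g : X * R -> R * nat) (ep : nat -> R) (y : X) k : X :=
  match k with
  | 0 => y
  | k'.+1 => resid g ep y k' - (g (resid g ep y k', ep k')).1 *: x (g (resid g ep y k', ep k')).2
  end.

Lemma lift (y : X) (d : R) : 0 < d -> exists z, Q z = y /\ `|z| <= `|y| + d.
Proof.
move=> d0.
have st : forall q : X * R, exists p : R * nat,
    0 < q.2 -> `|p.1| <= `|q.1| /\ `|q.1 - p.1 *: x p.2| < q.2.
  move=> [r t] /=; have [t0|t0] := boolP (0 < t).
    by have [p hp] := step r t0; exists p.
  by exists (0, 0%N).
have [g hg] := choice st.
pose h : R := 2^-1.
have h0 : 0 < h by rewrite invr_gt0.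
pose ep k := d * h ^+ k.+2.
have ep0 : forall k, 0 < ep k by move=> k; rewrite mulr_gt0 // exprn_gt0.
pose r k := resid g ep y k.
pose c k := (g (r k, ep k)).1.
pose nk k := (g (r k, ep k)).2.
have hc : forall k, `|c k| <= `|r k| by move=> k; have [] := hg (r k, ep k) (ep0 k).
have hr : forall k, `|r k.+1| < ep k by move=> k; have [] := hg (r k, ep k) (ep0 k).
have hc1 : forall j, (0 < j)%N -> `|c j| <= d * h ^+ j.+1.
  move=> [|j] // _; apply: le_trans (hc j.+1) _; exact: ltW (hr j).
pose S K := \sum_(j < K) c j *: e (nk j).
pose Sp K := S K.+1.
have SB : forall N k, (N <= k)%N -> `|Sp k - Sp N| <= d * h ^+ N.+1.
  move=> N k hk; rewrite /Sp /S -!(big_mkord xpredT (fun j => c j *: e (nk j))).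
  have hk2 : (N.+1 <= k.+1)%N by []. rewrite (big_cat_nat (leq0n N.+1) hk2) /= addrAC subrr add0r.
  apply: le_trans (ler_norm_sum _ _ _) _.
  under eq_bigr => j _ do rewrite normrZ He mulr1.
  apply: (@le_trans _ _ (\sum_(N.+1 <= j < k.+1) d * h ^+ j.+1)).
    by rewrite big_nat_cond [X in _ <= X]big_nat_cond; apply: ler_sum => j /andP[/andP[h1 _] _]; apply: hc1; lia.
  rewrite -mulr_sumr (_ : k.+1 = N.+1 + (k - N))%N; last by lia.
  rewrite geo ler_pM2l // lerBlDr lerDl exprn_ge0 // ltW.
have [z hz] : exists z : Z, Sp @ \oo --> z.
  apply: cauchy_seq => eps e0.
  have [N hN] := arch (divr_gt0 e0 d0).
  exists N => k hk; rewrite distrC; apply: le_lt_trans (SB N k hk) _.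
  rewrite -ltr_pdivlMl // mulrC.
  apply: le_lt_trans (hN N (leqnn N)); apply: le_trans (hpow _ _) _.
  rewrite lef_pV2 ?posrE ?ltr0Sn // ler_nat; lia.
have QS : forall K, Q (S K) = y - r K.
  elim=> [|K IH]; first by rewrite /S big_ord0 linear0 /r /= subrr.
  rewrite /S big_ord_recr /= linearD linearZ /= Qe -/(S K) IH.
  rewrite /r /= -/(r K) -/(c K) -/(nk K). by rewrite opprB addrA addrAC.
exists z; split.
  apply/eqP; rewrite -subr_eq0; apply/eqP; apply: norm_eps0 => eps e0.
  have e2 : 0 < eps / 2 by rewrite divr_gt0.
  have [K1 hK1] := cvg_epsN hz e2.
  have [K2 hK2] := arch (divr_gt0 e2 d0).
  pose K := maxn K1 K2.
  have k1 := hK1 K (leq_maxl _ _).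
  have k2 : `|r K.+1| < eps / 2.
    apply: lt_le_trans (hr K) _. rewrite /ep.
    have := hK2 K (leq_maxr _ _); rewrite (ltr_pdivlMr _ _ d0) mulrC => hh.
    apply: ltW; apply: le_lt_trans hh; rewrite ler_pM2l //.
    apply: le_trans (hpow _ _) _; rewrite lef_pV2 ?posrE ?ltr0Sn // ler_nat; lia.
  have k3 : `|Q z - y| <= `|Q z - Q (Sp K)| + `|Q (Sp K) - y| by apply: ler_distD.
  rewrite -linearB /Sp QS addrAC subrr add0r normrN in k3.
  have k4 := Qb (z - Sp K).
  have h7 : eps / 2 * 2 = eps by rewrite divfK.
  set A := `|Q z - y| in k3 *. set B := `|Q (z - Sp K)| in k3 k4.
  set D := `|r K.+1| in k2 k3. set E := `|z - Sp K| in k1 k4. set t := eps / 2 in e2 k1 k2 h7.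
  clearbody A B D E t. lra.
apply: eps_le => eps e0.
have [K hK] := cvg_epsN hz e0.
have k1 := hK K (leqnn K).
have k2 := SB 0%N K (leq0n K).
have k3 : `|Sp 0%N| <= `|y|.
  rewrite /Sp /S big_ord1 normrZ He mulr1; exact: (hc 0%N).
have k4 : `|z| <= `|z - Sp K| + `|Sp K - Sp 0%N| + `|Sp 0%N|.
  rewrite {1}(_ : z = (z - Sp K) + (Sp K - Sp 0%N) + Sp 0%N); last by rewrite !addrA subrK subrK.
  by apply: le_trans (ler_normD _ _) _; rewrite lerD2r; apply: ler_normD.
have k5 : d * h ^+ 1 <= d by rewrite expr1 ler_piMr // ltW // invf_lt1 // ltr1n.
lra.
Qed.
End Lift.

Section Gen2.
Variable R : realType.
Variables (X U : normedModType R) (x : nat -> X) (u : nat -> U).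

Lemma unc_mono : ban_one_unconditional u -> forall (b : nat -> R) N L, (N <= L)%N ->
  `|bpsum b u N| <= `|bpsum b u L|.
Proof.
move=> Hunc b N L hNL.
pose sg := fun i : nat => ~~ (i < N)%N.
have E : bpsum b u N = 2^-1 *: (\sum_(i < L) b i *: u i + \sum_(i < L) ((-1) ^+ sg i * b i) *: u i).
  rewrite -big_split /= (bpsumT b u hNL) /bpsum scaler_sumr; apply: eq_bigr => i _.
  rewrite -scalerDl scalerA /T /sg /=; case: ifP => hi /=.
    rewrite expr0 mul1r; congr (_ *: _); by field.
  by rewrite expr1 mulN1r subrr mulr0.
rewrite E normrZ ger0_norm ?invr_ge0 //.
apply: le_trans (ler_wpM2l _ (ler_normD _ _)) _; first by rewrite invr_ge0.
rewrite Hunc /bpsum. set t := `|_|. lra.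
Qed.

Lemma blk_inside (a : nat -> R) n0 m L s : inside n0 m s -> (m <= L)%N ->
  block_vec x u (T 0 L a) s = block_vec x u a s.
Proof.
move=> hs hm; rewrite /block_vec big_seq_cond [RHS]big_seq_cond; apply: eq_bigr => -[p1 p2] /andP[hp _].
have /andP[h1 h2] := allP hs _ hp.
rewrite G2 maxn0 /=. have -> : minn p2.+1 L = p2.+1 by move: h2 => /= h2; lia.
by [].
Qed.

Lemma block_cat (a : nat -> R) s1 s2 :
  block_vec x u a (s1 ++ s2) = block_vec x u a s1 + block_vec x u a s2.
Proof. by rewrite /block_vec big_cat. Qed.

Lemma cat_adm s1 s2 m1 n2 m2 : ban_admissible s1 -> inside 0 m1 s1 ->
  ban_admissible s2 -> inside n2 m2 s2 -> (m1 <= n2)%N -> (n2 <= m2)%N ->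
  ban_admissible (s1 ++ s2) && inside 0 m2 (s1 ++ s2).
Proof.
rewrite !adm_iff /inside => /andP[a1 pw1] i1 /andP[a2 pw2] i2 h1 h2.
rewrite !all_cat a1 a2 pairwise_cat pw1 pw2 /= andbT.
apply/and3P; split.
  apply/allrelP => -[p1 p2] [q1 q2] hp hq; rewrite /rr /=.
  have /andP[_ hp2] := allP i1 _ hp. have /andP[hq1 _] := allP i2 _ hq. move: hp2 hq1 => /= hp2 hq1. lia.
  apply/allP => -[p1 p2] hp; have /andP[_ hp2] := allP i1 _ hp; move: hp2 => /= hp2; lia.
apply/allP => -[p1 p2] hp; have /andP[hp1 hp2] := allP i2 _ hp; move: hp2 => /= hp2; lia.
Qed.

Lemma sum_delta (V : nmodType) (v : nat -> V) k L : (k < L)%N ->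
  \sum_(j < L) (if k == j then v j else 0) = v k.
Proof.
move=> hk; rewrite (bigD1 (Ordinal hk)) //= eqxx big1 ?addr0 // => j hj.
case: eqP => // hkj; move: hj; rewrite -val_eqE /= hkj eqxx //.
Qed.
End Gen2.

Lemma widen0 (V : nmodType) (F : nat -> V) n m : (n <= m)%N ->
  (forall k, (n <= k)%N -> (k < m)%N -> F k = 0) -> \sum_(k < n) F k = \sum_(k < m) F k.
Proof.
move=> hnm hF; rewrite -!(big_mkord xpredT F) (big_cat_nat (leq0n n) hnm) /=.
rewrite [X in _ = _ + X]big1_seq ?addr0 // => k /andP[_]; rewrite mem_index_iota => /andP[h1 h2].
exact: hF.
Qed.

Section PartII.
Variable R : realType.
Variables (X U : normedModType R) (Z : completeNormedModType R).
Variables (x : nat -> X) (u : nat -> U) (e : nat -> Z).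
Hypothesis Hx : forall n, `|x n| = 1.
Hypothesis Hu : forall n, `|u n| = 1.
Hypothesis H : forall (n : nat) (a : nat -> R),
     `|bpsum a e n| = Znorm x u (fun i => if (i < n)%N then a i else 0).
Hypothesis Hunc : ban_one_unconditional u.
Hypothesis Hbc : ban_boundedly_complete u.

Lemma Pdiff a N n : (N <= n)%N -> `|bpsum a e n - bpsum a e N| = Znorm x u (T N n a).
Proof.
move=> hn. have E : bpsum a e n - bpsum a e N = bpsum (T N n a) e n.
  rewrite !bpsumE G2 max0n minnn (big_cat_nat (leq0n N) hn) /=.
  by rewrite addrAC subrr add0r.
rewrite E H; congr Znorm; apply: funext => i; rewrite /T.
by case: (ltnP i n) => hi //; rewrite andbF.
Qed.

Lemma pick_block a eps N : 0 < eps ->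
  (exists n, (N <= n)%N /\ eps <= `|bpsum a e N - bpsum a e n|) ->
  exists p : nat * seq (nat * nat), [/\ (N < p.1)%N, ban_admissible p.2,
     inside N p.1 p.2 & eps / 4 < `|block_vec x u a p.2|].
Proof.
move=> e0 [n [hn hd]].
have hNn : (N < n)%N.
  rewrite ltn_neqAle hn andbT; apply/eqP => E; move: hd; rewrite E subrr normr0.
  by rewrite leNgt e0.
rewrite distrC Pdiff // in hd.
have e2 : eps / 2 < Znorm x u (T N n a).
  apply: lt_le_trans hd; rewrite ltr_pdivrMr // ltr_pMr // ltr1n //.
rewrite /Znorm in e2.
have ne : [set `|block_vec x u (T N n a) s| | s in [set s | ban_admissible s]] !=set0.
  by exists `|block_vec x u (T N n a) [::]|; exists [::].
have [y [s hs <-] hy] := sup_gt ne e2.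
have ht := trim x Hu a (n0:=N) (m:=n) (L:=n) s hNn (leqnn n).
have /andP[ah ih] := hi_adm N n hs. have /andP[al il] := lo_adm hNn hs.
rewrite (blk_inside _ _ a ih (leqnn n)) (blk_inside _ _ a il (leqnn n)) in ht.
have [h|h] := ltP (eps / 4) `|block_vec x u a (hi_of N n s)|.
  by exists (n, hi_of N n s); split.
exists (n, lo_of N n s); split => //=.
set A := `|block_vec x u a (hi_of N n s)| in h ht.
set B := `|block_vec x u a (lo_of N n s)| in ht *.
set yy := `|block_vec x u (T N n a) s| in hy ht.
clearbody A B yy. lra.
Qed.

Lemma bc_e : ban_boundedly_complete e.
Proof.
move=> a [M hM].
apply: cauchy_seq => eps e0.
case: (pselect (exists N, forall n, (N <= n)%N -> `|bpsum a e N - bpsum a e n| < eps)) => // hn.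
exfalso.
have hbad : forall N, exists n, (N <= n)%N /\ eps <= `|bpsum a e N - bpsum a e n|.
  move=> N; apply: contrapT => h; apply: hn; exists N => n hN.
  rewrite ltNge; apply/negP => h'; apply: h; exists n; split => //.
have [g hg] := choice (fun N => pick_block e0 (hbad N)).
pose nk k := iter k (fun t => (g t).1) 0%N.
pose sk k := (g (nk k)).2.
have hgk : forall k, [/\ (nk k < nk k.+1)%N, ban_admissible (sk k),
    inside (nk k) (nk k.+1) (sk k) & eps / 4 < `|block_vec x u a (sk k)|].
  by move=> k; exact: hg.
have nk_ge : forall k, (k <= nk k)%N.
  elim=> [|k IH] //; have [h1 _ _ _] := hgk k; exact: leq_ltn_trans IH h1.
have nk_mono : forall k k', (k <= k')%N -> (nk k <= nk k')%N.
  move=> k k' /subnK <-; elim: (k' - k)%N => [|d IH] //=.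
  have [h1 _ _ _] := hgk (d + k); apply: leq_trans IH (ltnW h1).
pose w k := block_vec x u a (sk k).
pose SS K := \big[cat/[::]]_(k < K) sk k.
have SSa : forall K, ban_admissible (SS K) && inside 0 (nk K) (SS K).
  elim => [|K IH]; first by rewrite /SS big_ord0.
  rewrite /SS big_ord_recr /= -/(SS K). case/andP: IH => a1 i1. have [h1 a2 i2 _] := hgk K.
  exact: (cat_adm a1 i1 a2 i2 (leqnn _) (ltnW h1)).
have SSw : forall K, block_vec x u a (SS K) = \sum_(k < K) w k.
  elim => [|K IH]; first by rewrite /SS !big_ord0 /block_vec big_nil.
  by rewrite /SS big_ord_recr /= block_cat -/(SS K) IH big_ord_recr.
have wM : forall K, `|\sum_(k < K) w k| <= M.
  move=> K; rewrite -SSw; case/andP: (SSa K) => a1 i1.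
  rewrite -(blk_inside _ _ a i1 (leqnn (nk K))). apply: le_trans (hM (nk K)).
  rewrite H T0; exact: Zn_ge.
pose c (p : nat * nat) := `|\sum_(p.1 <= i < p.2.+1) a i *: x i|.
pose gam k j := \sum_(p <- sk k) (if p.1 == j then c p else 0).
pose beta j := \sum_(k < j.+1) gam k j.
have gam0 : forall k j, (j < nk k)%N || (nk k.+1 <= j)%N -> gam k j = 0.
  move=> k j hj; rewrite /gam big1_seq // => -[p1 p2] /andP[_ hp].
  have [_ ha hi _] := hgk k. have /andP[h1 h2] := allP hi _ hp.
  move: ha; rewrite adm_iff => /andP[hok _]; have := allP hok _ hp; rewrite /okp /=.
  move: h1 h2 => /= h1 h2 h3.
  case: eqP => //= E; subst j. change (is_true (p2 < nk k.+1)%N) in h2. lia.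
have gw : forall k L, (nk k.+1 <= L)%N -> w k = bpsum (gam k) u L.
  move=> k L hL; rewrite /w /block_vec /bpsum.
  under [RHS]eq_bigr => j _ do rewrite /gam scaler_suml.
  rewrite exchange_big /= [LHS]big_seq [RHS]big_seq; apply: eq_bigr => -[p1 p2] hp.
  rewrite (eq_bigr (fun j : 'I_L => if p1 == j then c (p1, p2) *: u j else 0)); last first.
    by move=> j _ /=; case: eqP; rewrite ?scale0r.
  rewrite (sum_delta (fun j => c (p1, p2) *: u j)) //.
  have [_ ha hi _] := hgk k. have /andP[h1 h2] := allP hi _ hp.
  move: ha; rewrite adm_iff => /andP[hok _]; have := allP hok _ hp; rewrite /okp /=.
  move: h1 h2 => /= h1 h2 h3; change (is_true (p2 < nk k.+1)%N) in h2; lia.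
have b2 : forall K, bpsum beta u (nk K) = \sum_(k < K) w k.
  move=> K.
  rewrite (eq_bigr (fun k : 'I_K => bpsum (gam k) u (nk K))); last first.
    by move=> k _; rewrite (gw k (nk K)) // nk_mono.
  rewrite /bpsum exchange_big /=. apply: eq_bigr => j _. rewrite -scaler_suml. congr (_ *: _).
  rewrite /beta (@widen0 _ (fun k => gam k j) _ (j.+1 + K)%N) ?leq_addr //; last first.
    move=> k hk1 hk2; apply: gam0; apply/orP; left.
    apply: (leq_trans hk1); exact: nk_ge.
  rewrite [RHS](@widen0 _ (fun k => gam k j) _ (j.+1 + K)%N) ?leq_addl //.
  move=> k hk1 hk2; apply: gam0; apply/orP; left.
  apply: (leq_trans (ltn_ord j)); exact: nk_mono.
have bnd : forall N, `|bpsum beta u N| <= M.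
  move=> N; apply: le_trans (unc_mono Hunc beta (nk_ge N)) _; rewrite b2; exact: wM.
have [l hl] := Hbc (ex_intro _ M bnd).
have e8 : 0 < eps / 8 by rewrite divr_gt0.
have [K hK] := cvg_epsN hl e8.
have k1 := hK (nk K) (nk_ge K).
have k2 := hK (nk K.+1) (leq_trans (nk_ge K) (nk_mono _ _ (leqnSn K))).
have wE : w K = bpsum beta u (nk K.+1) - bpsum beta u (nk K).
  by rewrite !b2 big_ord_recr /= addrAC subrr add0r.
have [_ _ _ hw] := hgk K.
have k3 : `|w K| <= `|l - bpsum beta u (nk K)| + `|l - bpsum beta u (nk K.+1)|.
  rewrite wE (distrC l (bpsum beta u (nk K.+1))) [X in _ <= X]addrC; apply: ler_distD.
have h8 : eps / 8 * 8 = eps by rewrite divfK.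
have h4 : eps / 4 = eps / 8 * 2 by field.
rewrite -/(w K) in hw.
set A := `|w K| in hw k3. set B := `|l - bpsum beta u (nk K)| in k1 k3.
set D := `|l - bpsum beta u (nk K.+1)| in k2 k3. set t := eps / 8 in e8 k1 k2 h8 h4.
set t4 := eps / 4 in hw h4.
clearbody A B D t t4. lra.
Qed.
End PartII.

Theorem propositionA2 (R : realType)
  (X : completeNormedModType R) (x : nat -> X)
  (U : completeNormedModType R) (u : nat -> U)
  (Z : completeNormedModType R) (e : nat -> Z) :
  ban_separable X ->
  (forall n, `|x n| = 1) ->
  (forall y : X, `|y| = 1 -> forall eps : R, 0 < eps ->
     exists n, `|y - x n| < eps \/ `|y + x n| < eps) ->
  ban_schauder_basis u -> ban_normalized u -> ban_one_unconditional u ->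
  (forall (n : nat) (a : nat -> R),
     `|bpsum a e n| = Znorm x u (fun i => if (i < n)%N then a i else 0)) ->
  (forall (z : Z) (eps : R), 0 < eps ->
     exists (n : nat) (a : nat -> R), `|z - bpsum a e n| < eps) ->
  (ban_normalized e /\ ban_monotone e /\ ban_schauder_basis e) /\
  (ban_boundedly_complete u -> ban_boundedly_complete e) /\
  (exists Q : {linear Z -> X},
     (forall (a : nat -> R) (z : Z), bpsum a e @ \oo --> z ->
        bpsum a x @ \oo --> Q z) /\
     ban_quotient_map Q /\
     (forall z : Z, `|Q z| <= `|z|) /\
     (forall eps : R, 0 < eps -> forall y : X, `|y| <= 1 ->
        exists z : Z, `|z| <= 1 + eps /\ Q z = y)).
Proof.
move=> _ Hx Hsph _ Hu Hunc H dens.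
have He : forall n, `|e n| = 1 by move=> n; exact: (norm_e Hx Hu H).
split; first (split; [exact: He | split; [exact: (F3 Hx Hu H) | exact: (schauder_e Hx Hu H dens)]]).
split; first by move=> hbc; exact: (bc_e Hx Hu H Hunc hbc).
have FT : forall (a : nat -> R) n N, (n <= N)%N -> bpsum a x n = bpsum (T 0 n a) x N.
  by move=> a n N hn; exact: bpsumT.
have FL : forall c (a b : nat -> R) n, bpsum (fun i => c * a i + b i) x n = c *: bpsum a x n + bpsum b x n.
  by move=> c a b n; rewrite bpsumD bpsumZ.
have FN : forall (a : nat -> R) n, `|bpsum a x n| <= 1 * `|bpsum a e n|.
  by move=> a n; rewrite mul1r; exact: (F2 Hx Hu H).
have [f hf] := ext dens ler01 FT FL FN.
pose Q := mkLin (f_lin dens ler01 FT FL hf).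
exists Q.
have Qb : forall z, `|Q z| <= `|z|.
  by move=> z; rewrite mkLinE; have := f_bound FL hf z; rewrite mul1r.
have Qe : forall n, Q (e n) = x n.
  by move=> n; rewrite mkLinE -(bpsum_delta e n) (f_on hf) bpsum_delta.
have L := lift He Hsph Qe Qb.
split; [|split; [|split]].
- move=> a z hz; apply: epsN_cvg => eps e0; have [N hN] := cvg_epsN hz e0; exists N => n hn.
  rewrite mkLinE; apply: le_lt_trans (hf z a n) _; rewrite mul1r; exact: hN.
- move=> y; split; first by have [z [hz _]] := L y 1 ltr01; exists z.
  apply/eqP; rewrite eq_le; apply/andP; split.
    apply: lb_le_inf.
      by have [z [hz _]] := L y 1 ltr01; exists `|z|; exists z.
    by move=> r [z hz <-]; rewrite -hz; exact: Qb.
  apply: eps_le => eps e0. have [z [hz hz2]] := L y eps e0.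
  apply: le_trans hz2. apply: ge_inf; last by exists z.
  by exists 0 => r [z' _ <-]; exact: normr_ge0.
- exact: Qb.
- move=> eps e0 y hy; have [z [hz hz2]] := L y eps e0; exists z; split => //.
  by apply: le_trans hz2 _; rewrite lerD2r.
Qed.
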